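(* Let $\mathcal{S}=(L,A,<)$ be an abstract numeration system built on a prefix-closed regular language $L$. A sequence $\mathbf{x}$ over a finite alphabet is $\mathcal{S}$-automatic if and only if the labeled tree $T(L)$ decorated by $\mathbf{x}$ is rational.
   Context: An abstract numeration system is a triple $\mathcal{S}=(L,A,<)$ with $L$ an infinite language over a totally ordered finite alphabet $A$; $\mathrm{rep}_{\mathcal{S}}(n)$ is the $(n+1)$st word of $L$ in radix order (shorter words first, then lexicographic), and $\mathrm{val}_{\mathcal{S}}$ is its inverse. $\mathbf{x}=x_0x_1\cdots$ is $\mathcal{S}$-automatic if there is a deterministic finite automaton with output $(Q,q_0,A,\delta,\tau)$ with $x_n=\tau(\delta(q_0,\mathrm{rep}_{\mathcal{S}}(n)))$ for all $n$. $T(L)$ is the tree whose nodes are the words of $L$, with an edge labeled $d$ from $w$ to $wd$ whenever $w,wd\in L$; it is decorated by $\mathbf{x}$ by giving node $w$ the decoration $x_{\mathrm{val}_{\mathcal{S}}(w)}$. For $w\in L$, the suffix $T[w]$ has domain $w^{-1}L=\{u: wu\in L\}$ and node $u$ of $T[w]$ has decoration $x_{\mathrm{val}_{\mathcal{S}}(wu)}$; two suffixes are equal if they have the same domain and the same decorations at every node of the domain. The decorated tree is rational if it has finitely many distinct suffixes. *)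

(* Defs.v *)
From mathcomp Require Import all_boot all_order.
From Stdlib Require Import ClassicalEpsilon.
Set Implicit Arguments. Unset Strict Implicit. Unset Printing Implicit Defensive.
Import Order.TTheory.
Local Open Scope order_scope.

Section ANS.
Variables (d : Order.disp_t) (A : finOrderType d).

Fixpoint lexlt (u v : seq A) : bool :=
  match u, v with
  | [::], _ :: _ => true
  | a :: u', b :: v' => (a < b) || ((a == b) && lexlt u' v')
  | _, _ => false
  end.

Definition radix_lt (u v : seq A) : bool :=
  (size u < size v)%N || ((size u == size v) && lexlt u v).

(* val_S w = number of words of L radix-smaller than w
   (only words of length <= |w| can be radix-smaller than w) *)
Definition valS (L : pred (seq A)) (w : seq A) : nat :=
  \sum_(m < (size w).+1)
     #|[pred t : m.-tuple A | L (tval t) && radix_lt (tval t) w]|.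

(* rep_S n = the (n+1)st word of L in radix order, i.e. the word w of L
   with val_S w = n (unique; it exists when L is infinite). *)
Definition repS (L : pred (seq A)) (n : nat) : seq A :=
  epsilon (inhabits [::]) (fun w => L w /\ valS L w = n).

Definition prefix_closed (L : pred (seq A)) : Prop :=
  forall u v : seq A, L (u ++ v) -> L u.

Definition infinite_lang (L : pred (seq A)) : Prop :=
  ~ (exists s : seq (seq A), forall w, L w -> w \in s).

Definition regular_lang (L : pred (seq A)) : Prop :=
  exists (Q : finType) (q0 : Q) (delta : Q -> A -> Q) (F : pred Q),
    forall w, L w = F (foldl delta q0 w).

Definition S_automatic (L : pred (seq A)) (B : Type) (x : nat -> B) : Prop :=
  exists (Q : finType) (q0 : Q) (delta : Q -> A -> Q) (tau : Q -> B),
    forall n, x n = tau (foldl delta q0 (repS L n)).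

(* the suffix T[w] of the decorated tree T(L): the partial map on the
   domain w^{-1}L giving node u the decoration x_{val(wu)} (None outside
   the domain). Two suffixes are equal iff these maps are equal. *)
Definition tree_suffix (L : pred (seq A)) (B : Type) (x : nat -> B)
    (w : seq A) : seq A -> option B :=
  fun u => if L (w ++ u) then Some (x (valS L (w ++ u))) else None.

Definition rational_tree (L : pred (seq A)) (B : Type) (x : nat -> B) : Prop :=
  exists s : seq (seq A -> option B),
    forall w, L w -> List.In (tree_suffix L x w) s.

End ANS.

(* Main.v *)
Require Import Defs.
From mathcomp Require Import all_boot all_order.
From Stdlib Require Import ClassicalEpsilon Classical FunctionalExtensionality.
Set Implicit Arguments. Unset Strict Implicit. Unset Printing Implicit Defensive.
Import Order.TTheory.

Section Aux.
Variables (d : Order.disp_t) (A : finOrderType d).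
Implicit Types u v w t : seq A.

Lemma lexlt_irr u : lexlt u u = false.
Proof. by elim: u => //= a u ->; rewrite Order.POrderTheory.ltxx eqxx. Qed.

Lemma lexlt_trans u v w : lexlt u v -> lexlt v w -> lexlt u w.
Proof.
elim: u v w => [|a u IH] [|b v] [|c w] //=.
case/orP=> [ab|/andP[/eqP <- uv]]; case/orP=> [bc|/andP[/eqP <- vw]].
- by rewrite (Order.POrderTheory.lt_trans ab bc).
- by rewrite ab.
- by rewrite bc.
- by rewrite eqxx (IH _ _ uv vw) orbT.
Qed.

Lemma lexlt_total u v : u != v -> lexlt u v || lexlt v u.
Proof.
elim: u v => [|a u IH] [|b v] //=.
case: (Order.TotalTheory.ltgtP a b) => [ab|ba|<-] //=.
rewrite eqseq_cons eqxx /= => /IH.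
done.
Qed.

Lemma radix_irr u : radix_lt u u = false.
Proof. by rewrite /radix_lt ltnn lexlt_irr andbF. Qed.

Lemma radix_trans u v w : radix_lt u v -> radix_lt v w -> radix_lt u w.
Proof.
rewrite /radix_lt.
case/orP=> [uv|/andP[/eqP uv luv]]; case/orP=> [vw|/andP[/eqP vw lvw]].
- by rewrite (ltn_trans uv vw).
- by rewrite -vw uv.
- by rewrite uv vw.
- by rewrite uv vw eqxx (lexlt_trans luv lvw) orbT.
Qed.

Lemma radix_total u v : u != v -> radix_lt u v || radix_lt v u.
Proof.
move=> /lexlt_total; rewrite /radix_lt.
case: (ltngtP (size u) (size v)) => //= _; by rewrite orbT.
Qed.

Lemma radix_size u v : radix_lt u v -> (size u <= size v)%N.
Proof. by rewrite /radix_lt => /orP[/ltnW|/andP[/eqP -> _]]. Qed.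

Definition tw (m : nat) : seq (seq A) := map (fun t : m.-tuple A => tval t) (enum {: m.-tuple A}).

Fixpoint words (N : nat) : seq (seq A) :=
  match N with 0 => tw 0 | N'.+1 => words N' ++ tw N'.+1 end.

Lemma mem_tw m t : (t \in tw m) = (size t == m).
Proof.
apply/idP/idP.
  by case/mapP=> u _ ->; rewrite size_tuple.
move=> H; apply/mapP; exists (Tuple H) => //; by rewrite mem_enum.
Qed.

Lemma uniq_tw m : uniq (tw m).
Proof. rewrite map_inj_uniq ?enum_uniq //; exact: val_inj. Qed.

Lemma mem_words N t : (t \in words N) = (size t <= N)%N.
Proof.
elim: N => [|N IH] /=; first by rewrite mem_tw leqn0.
by rewrite mem_cat IH mem_tw (leq_eqVlt _ N.+1) orbC.
Qed.

Lemma uniq_words N : uniq (words N).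
Proof.
elim: N => [|N IH] /=; first exact: uniq_tw.
rewrite cat_uniq IH uniq_tw andbT /=.
apply/hasPn => t; rewrite mem_tw mem_words => /eqP ->; by rewrite ltnn.
Qed.

Lemma cardP m (P : pred (seq A)) :
  #|[pred t : m.-tuple A | P (tval t)]| = count P (tw m).
Proof.
rewrite count_map cardE /enum_mem size_filter /enum_mem count_filter.
by apply: eq_count => x; rewrite !inE andbT.
Qed.

Lemma count_words N (P : pred (seq A)) :
  count P (words N) = \sum_(m < N.+1) count P (tw m).
Proof.
elim: N => [|N IH] /=; first by rewrite big_ord_recr big_ord0.
by rewrite count_cat IH [in RHS]big_ord_recr.
Qed.

Variable L : pred (seq A).

Lemma valS_count w N : (size w <= N)%N ->
  valS L w = count (fun t => L t && radix_lt t w) (words N).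
Proof.
move=> H; rewrite -(subnKC H); elim: (N - size w) => [|j IH].
  rewrite addn0 count_words /valS; apply: eq_bigr => m _; exact: cardP.
rewrite IH addnS /= count_cat.
set c := count _ (tw _); suff -> : c = 0 by rewrite addn0.
apply/eqP; rewrite -leqn0 leqNgt -has_count; apply/hasPn => t.
rewrite mem_tw => /eqP st; apply/negP => /andP[_ /radix_size].
by rewrite st ltnNge leq_addr.
Qed.


Lemma count_lt_strict (T : eqType) (P Q : pred T) (v : T) (s : seq T) :
  (forall t : T, Q t -> P t) -> ~~ Q v -> P v -> v \in s -> (count Q s < count P s)%N.
Proof.
move=> HQP nQ Pv; elim: s => //= a s IH; rewrite in_cons => /orP[/eqP <-|vs].
  by rewrite (negbTE nQ) Pv add0n add1n ltnS; apply: sub_count.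
rewrite -addnS; apply: leq_add; last exact: IH.
by case Qa: (Q a) => //=; rewrite HQP.
Qed.

Lemma count_split1 (T : eqType) (p : pred T) (s : seq T) (v : T) :
  uniq s -> v \in s -> p v -> count p s = (count (fun t : T => p t && (t != v)) s).+1.
Proof.
elim: s => //= a s IH /andP[anin us]; rewrite in_cons => /orP[/eqP va|vs] pv.
  subst v; rewrite pv eqxx andbF add0n add1n; congr S; apply: eq_in_count => t' ts /=.
  rewrite (_ : t' != a) ?andbT //; apply/negP => /eqP tv; by rewrite -tv ts in anin.
have av : a != v by apply/negP => /eqP av; rewrite av vs in anin.
by rewrite IH // av andbT addnS.
Qed.

Lemma valS_mono u w : L u -> radix_lt u w -> (valS L u < valS L w)%N.
Proof.
move=> Lu uw; rewrite (valS_count (radix_size uw)) (valS_count (leqnn _)).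
apply: (count_lt_strict (v := u)).
- by move=> t /andP[-> tu] /=; apply: radix_trans tu uw.
- by rewrite radix_irr andbF.
- by rewrite Lu uw.
- by rewrite mem_words radix_size.
Qed.

Lemma valS_inj u w : L u -> L w -> valS L u = valS L w -> u = w.
Proof.
move=> Lu Lw E; apply/eqP; apply/negPn/negP => /radix_total /orP[] H.
  by have := valS_mono Lu H; rewrite E ltnn.
by have := valS_mono Lw H; rewrite E ltnn.
Qed.

Lemma rep_val w : L w -> repS L (valS L w) = w.
Proof.
move=> Lw; rewrite /repS.
have [] := @epsilon_spec _ (inhabits [::]) (fun v => L v /\ valS L v = valS L w)
  (ex_intro _ w (conj Lw erefl)).
move=> Le E; exact: valS_inj Le Lw E.
Qed.

Lemma max_exists (s : seq (seq A)) : s != [::] ->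
  exists2 v, v \in s & forall t, t \in s -> (t == v) || radix_lt t v.
Proof.
elim: s => // a s IH _; case: (eqVneq s [::]) => [->|/IH [v vs Hv]].
  by exists a; [rewrite mem_head | move=> t; rewrite inE => ->].
case: (boolP (radix_lt a v)) => av.
  exists v; first by rewrite in_cons vs orbT.
  by move=> t; rewrite in_cons => /orP[/eqP ->|/Hv //]; rewrite av orbT.
have va : (v == a) || radix_lt v a.
  case: (eqVneq v a) => //= H; move: (radix_total H); by rewrite (negbTE av) orbF.
exists a; first exact: mem_head.
move=> t; rewrite in_cons => /orP[ta|]; first by rewrite ta.
move/Hv => /orP[/eqP tv|tv].
  by rewrite tv; case/orP: va => ->; rewrite ?orbT.
case/orP: va => [/eqP <-|va]; first by rewrite tv orbT.
by rewrite (radix_trans tv va) orbT.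
Qed.

Lemma pred_exists w k : L w -> valS L w = k.+1 -> exists v, L v /\ valS L v = k.
Proof.
move=> Lw Hk.
set SS := filter (fun t => L t && radix_lt t w) (words (size w)).
have sS : size SS = k.+1 by rewrite size_filter -valS_count.
have ne : SS != [::] by rewrite -size_eq0 sS.
have [v vS Hv] := max_exists ne.
move: (vS); rewrite mem_filter => /andP[/andP[Lv vw] vW].
exists v; split => //.
rewrite (valS_count (radix_size vw)); apply: succn_inj.
rewrite -Hk (valS_count (leqnn _)) (@count_split1 _ (fun t => L t && radix_lt t w) _ _ (uniq_words _) vW); last by rewrite /= Lv vw.
congr S; apply: eq_in_count => t tW /=.
case Lt: (L t) => //=; apply/idP/idP.
  move=> tv; rewrite (radix_trans tv vw) /=; apply/eqP => tv'.
  by rewrite tv' radix_irr in tv.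
move=> /andP[tw tnv]; have : t \in SS by rewrite mem_filter Lt tw tW.
by move/Hv; rewrite (negbTE tnv).
Qed.

Hypothesis pc : prefix_closed L.
Hypothesis inf : infinite_lang L.

Lemma valS_size w : L w -> (size w <= valS L w)%N.
Proof.
move=> Lw; rewrite (valS_count (leqnn _)) -size_filter.
rewrite -[X in (X <= _)%N](size_iota 0) -(size_map (fun i => take i w)).
apply: uniq_leq_size.
  rewrite map_inj_in_uniq ?iota_uniq // => i j.
  rewrite !mem_iota /= !add0n => hi hj /(congr1 size).
  by rewrite !size_take hi hj.
move=> t /mapP [i]; rewrite mem_iota add0n /= => hi ->.
rewrite mem_filter mem_words size_take hi (ltnW hi) andbT.
rewrite /radix_lt size_take hi hi /= andbT.
by apply: (pc (v := drop i w)); rewrite cat_take_drop.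
Qed.

Lemma long_words N : exists w, L w /\ (N < size w)%N.
Proof.
apply: NNPP => H; apply: inf; exists (words N) => w Lw.
rewrite mem_words leqNgt; apply/negP => Hs; apply: H; by exists w.
Qed.

Lemma valS_surj n : exists w, L w /\ valS L w = n.
Proof.
have [w [Lw Hs]] := long_words n.
have hn : (n <= valS L w)%N := leq_trans (ltnW Hs) (valS_size Lw).
have [m E] : exists m, valS L w = n + m by exists (valS L w - n); rewrite subnKC.
elim: m w Lw E {Hs hn} => [|m IH] w Lw E; first by exists w; rewrite E addn0.
rewrite addnS in E; have [v [Lv Ev]] := pred_exists Lw E; exact: IH v Lv Ev.
Qed.

Lemma repS_spec n : L (repS L n) /\ valS L (repS L n) = n.
Proof. exact: (@epsilon_spec _ (inhabits [::]) (fun w => L w /\ valS L w = n) (valS_surj n)). Qed.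

Lemma L_nil : L [::].
Proof.
case E: (L [::]) => //; exfalso; apply: inf; exists [::] => w Lw.
by have := pc (u := [::]) (v := w) Lw; rewrite E.
Qed.

End Aux.

Lemma in_map_In (T : eqType) (U : Type) (f : T -> U) (s : seq T) (a : T) :
  a \in s -> List.In (f a) (map f s).
Proof.
elim: s => //= b s IH; rewrite in_cons => /orP[/eqP ->|/IH]; [left|right] => //.
Qed.

Lemma In_nth_ex (U : Type) (d0 : U) (s : seq U) (f : U) :
  List.In f s -> exists n, (n < size s)%N /\ nth d0 s n = f.
Proof.
elim: s => //= b s IH [->|/IH [n [ns E]]]; first by exists 0.
by exists n.+1.
Qed.

Theorem mainTheorem8 (d : Order.disp_t) (A : finOrderType d)
    (L : pred (seq A)) (B : finType) (x : nat -> B) :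
  infinite_lang L -> prefix_closed L -> regular_lang L ->
  (S_automatic L x <-> rational_tree L x).
Proof.
move=> inf pc [Q1 [q1 [d1 [F HL]]]]; split.
  move=> [Q2 [q2 [d2 [tau Hx]]]].
  pose g (k : Q1 * Q2) : seq A -> option B :=
    fun u => if F (foldl d1 k.1 u) then Some (tau (foldl d2 k.2 u)) else None.
  exists (map g (enum {: Q1 * Q2})) => w Lw.
  have -> : tree_suffix L x w = g (foldl d1 q1 w, foldl d2 q2 w).
    apply: functional_extensionality => u; rewrite /tree_suffix /g /= HL foldl_cat.
    case: ifP => // Fu; rewrite Hx rep_val ?foldl_cat //.
    by rewrite HL foldl_cat.
  by apply: in_map_In; rewrite mem_enum.
move=> [s Hs].
pose d0 : seq A -> option B := fun _ => None.
pose idx (f : seq A -> option B) : option 'I_(size s) :=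
  match excluded_middle_informative (exists i : 'I_(size s), nth d0 s i = f) with
  | left H => Some (proj1_sig (constructive_indefinite_description _ H))
  | right _ => None end.
pose fn (q : option 'I_(size s)) := match q with Some i => nth d0 s i | None => d0 end.
have fn_idx : forall f, List.In f s -> fn (idx f) = f.
  move=> f /(In_nth_ex d0) [n [ns E]]; rewrite /idx.
  case: excluded_middle_informative => [H|[]]; last by exists (Ordinal ns).
  by case: (constructive_indefinite_description _ H) => i Hi /=.
pose delta (q : option 'I_(size s)) (a : A) := idx (fun u => fn q (a :: u)).
pose tau (q : option 'I_(size s)) := match fn q [::] with Some b => b | None => x 0 end.
exists (option 'I_(size s)), (idx (tree_suffix L x [::])), delta, tau.
have inv : forall w, L w ->
    fn (foldl delta (idx (tree_suffix L x [::])) w) = tree_suffix L x w.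
  elim/last_ind => [|w a IH] Lwa; first by apply: fn_idx; apply: Hs.
  rewrite foldl_rcons /delta.
  have Lw : L w by move: Lwa; rewrite -cats1; exact: pc.
  rewrite IH //.
  have -> : (fun u => tree_suffix L x w (a :: u)) = tree_suffix L x (rcons w a).
    by apply: functional_extensionality => u; rewrite /tree_suffix -cats1 -catA.
  by apply: fn_idx; apply: Hs.
move=> n; have [Lr Vr] := repS_spec pc inf n.
by rewrite /tau inv // /tree_suffix cats0 Lr Vr.
Qed.
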